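(* Let $\Theta$ be a finite set, $c\in\mathbb{R}^{\Theta}$, and let $\mathcal{Y}=((b_1,v_1),\dots,(b_m,v_m))$ be a finite ordered list with $b_j\in\mathbb{R}^{\Theta}_{\ge0}\setminus\{0\}$, $v_j\in\mathbb{R}$. Define $\Upsilon_v(b)$ for $b\in\mathbb{R}^\Theta_{\ge0}$ by: if no $j$ satisfies $v_j-c^Tb_j>0$, set $\Upsilon_v(b)=c^Tb$; otherwise, with $j^*$ the first index with $v_{j^*}-c^Tb_{j^*}>0$, set $$\Upsilon_v(b)=c^Tb+\Big(\min_{\vartheta:\,b_{j^*}(\vartheta)>0}\frac{b(\vartheta)}{b_{j^*}(\vartheta)}\Big)(v_{j^*}-c^Tb_{j^*}).$$ Similarly, for a list $((\zeta_1,w_1),\dots,(\zeta_m,w_m))$ with $\zeta_j\in\mathbb{R}^\Theta_{\ge0}\setminus\{0\}$, define $\Upsilon_w(\lambda)$ for $\lambda\in\mathbb{R}^\Theta_{\ge0}$ by: if no $j$ satisfies $w_j-c^T\zeta_j<0$, $\Upsilon_w(\lambda)=c^T\lambda$; otherwise with $j^*$ the first such index, $$\Upsilon_w(\lambda)=c^T\lambda+\Big(\min_{\vartheta:\,\zeta_{j^*}(\vartheta)>0}\frac{\lambda(\vartheta)}{\zeta_{j^*}(\vartheta)}\Big)(w_{j^*}-c^T\zeta_{j^*}).$$ Then the constraint $V\le\Upsilon_v(b)$ is linear in the variables $(V,b)$ and the constraint $W\ge\Upsilon_w(\lambda)$ is linear in $(W,\lambda)$: there exist finitely many affine functions $\ell_1,\dots,\ell_K$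 on $\mathbb{R}^\Theta$ such that for all $V\in\mathbb{R}$, $b\in\mathbb{R}^\Theta_{\ge0}$, $V\le\Upsilon_v(b)$ iff $V\le\ell_k(b)$ for all $k$; and finitely many affine $m_1,\dots,m_L$ such that for all $W\in\mathbb{R}$, $\lambda\in\mathbb{R}^\Theta_{\ge0}$, $W\ge\Upsilon_w(\lambda)$ iff $W\ge m_l(\lambda)$ for all $l$.
   Context: These are the sawtooth approximations used in a point-based value iteration algorithm: $\Upsilon_v$ (SAWTOOTH-A) is computed from a set of ''corner'' belief-value pairs, whose values form the vector $c$ (the value at the corner point of index $\vartheta$ gives $c(\vartheta)$), and a set $\mathcal{Y}$ of non-corner belief-value pairs; $\Upsilon_w$ (SAWTOOTH-D) is the analogous construction for vectors in $\mathbb{R}^{|\Theta|}$. *)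

(* Defs.v *)
From HB Require Import structures.
From mathcomp Require Import all_boot all_order all_algebra.
Set Implicit Arguments. Unset Strict Implicit. Unset Printing Implicit Defensive.
Import Order.TTheory GRing.Theory Num.Theory.
Local Open Scope ring_scope.

Section Sawtooth.
Variables (R : realFieldType) (Theta : finType).

Definition dotp (c b : Theta -> R) : R := \sum_(t : Theta) c t * b t.

(* min over { t | z t > 0 } of b t / z t  (0 if that set is empty; it is
   never empty in the uses below since z is nonnegative and nonzero) *)
Definition minratio (z b : Theta -> R) : R :=
  match [seq b t / z t | t <- enum Theta & 0 < z t] with
  | [::] => 0
  | x :: s => foldr Num.min x s
  end.

Fixpoint upsilon_v (c : Theta -> R) (Y : seq ((Theta -> R) * R)) (b : Theta -> R) : R :=
  match Y with
  | [::] => dotp c b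
  | (bj, vj) :: Y' =>
      if 0 < vj - dotp c bj
      then dotp c b + minratio bj b * (vj - dotp c bj)
      else upsilon_v c Y' b
  end.

Fixpoint upsilon_w (c : Theta -> R) (Z : seq ((Theta -> R) * R)) (l : Theta -> R) : R :=
  match Z with
  | [::] => dotp c l
  | (zj, wj) :: Z' =>
      if wj - dotp c zj < 0
      then dotp c l + minratio zj l * (wj - dotp c zj)
      else upsilon_w c Z' l
  end.

Definition affine_eval (f : (Theta -> R) * R) (b : Theta -> R) : R :=
  dotp f.1 b + f.2.

Definition nonneg_vec (b : Theta -> R) : Prop := forall t, 0 <= b t.

Definition nonneg_nonzero (b : Theta -> R) : Prop := nonneg_vec b /\ exists t, b t != 0.

End Sawtooth.

(* Main.v *)
Require Import Defs.
From HB Require Import structures.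
From mathcomp Require Import all_boot all_order all_algebra.
From Stdlib Require List.
Import Order.TTheory GRing.Theory Num.Theory.
Local Open Scope ring_scope.

Section Aux.
Variables (R : realFieldType) (Theta : finType).

Lemma le_foldr_min (V x : R) (s : seq R) :
  V <= foldr Num.min x s <-> (forall y, List.In y (x :: s) -> V <= y).
Proof.
elim: s => [|y s IH] /=.
  by split=> [H y [<-|[]]|H]; [|apply: H; left].
rewrite le_min; split.
  move=> /andP[H1 /IH H2] z [<-|[<-|Hz]] //; apply: H2; first by left.
  by right.
move=> H; apply/andP; split; first by apply: H; right; left.
by apply/IH => z [<-|Hz]; apply: H; [left|right; right].
Qed.

Lemma dotp_delta (c b : Theta -> R) (k : R) (t : Theta) :
  dotp (fun u => c u + k * (u == t)%:R) b = dotp c b + k * b t.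
Proof.
rewrite /dotp; under eq_bigr do rewrite mulrDl.
rewrite big_split /=; congr (_ + _).
rewrite (bigD1 t) //= eqxx mulr1 big1 ?addr0 // => u /negbTE ->.
by rewrite mulr0 mul0r.
Qed.

Definition gfun (c z : Theta -> R) (d : R) (t : Theta) : (Theta -> R) * R :=
  (fun u => c u + (d / z t) * (u == t)%:R, 0).

Lemma gfun_eval c z d t b :
  affine_eval (gfun c z d t) b = dotp c b + b t / z t * d.
Proof.
rewrite /affine_eval /= dotp_delta addr0; congr (_ + _).
by rewrite mulrC mulrA mulrAC.
Qed.

Lemma in_map_gfun c z d T f :
  List.In f (map (gfun c z d) T) <-> exists t, List.In t T /\ f = gfun c z d t.
Proof.
rewrite List.in_map_iff; split => -[t [H1 H2]]; exists t; by split.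
Qed.

Lemma in_map_ratio (b z : Theta -> R) (T : seq Theta) y :
  List.In y (map (fun t => b t / z t) T) <-> exists t, List.In t T /\ y = b t / z t.
Proof.
rewrite List.in_map_iff; split => -[t [H1 H2]]; exists t; by split.
Qed.

Lemma lin_min (c z : Theta -> R) (d : R) (hd : 0 < d) :
  exists ls : seq ((Theta -> R) * R),
    forall V b, V <= dotp c b + minratio z b * d <->
      (forall f, List.In f ls -> V <= affine_eval f b).
Proof.
rewrite /minratio.
case E: [seq t <- enum Theta | 0 < z t] => [|t0 T].
  exists [:: (c, 0)] => V b; rewrite /= mul0r addr0.
  split=> [H f [<-|[]]|H]; first by rewrite /affine_eval addr0.
  by have := H _ (or_introl erefl); rewrite /affine_eval addr0.
exists (map (gfun c z d) (t0 :: T)) => V b.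
rewrite /=.
have -> : V <= dotp c b + foldr Num.min (b t0 / z t0) [seq b t / z t | t <- T] * d
   <-> (V - dotp c b) / d <= foldr Num.min (b t0 / z t0) [seq b t / z t | t <- T].
  by rewrite ler_pdivrMr // lerBlDl.
rewrite le_foldr_min (_ : b t0 / z t0 :: _ = map (fun t => b t / z t) (t0 :: T)) //; split.
  move=> H f Hf; have /in_map_gfun [t [Ht ->]] : List.In f (map (gfun c z d) (t0 :: T)) by []; rewrite gfun_eval.
  have := H (b t / z t) (proj2 (in_map_ratio b z (t0 :: T) _) (ex_intro _ t (conj Ht erefl))).
  by rewrite ler_pdivrMr // lerBlDl.
move=> H y Hy; have /in_map_ratio [t [Ht ->]] : List.In y (map (fun t => b t / z t) (t0 :: T)) by [].
have := H (gfun c z d t) (proj2 (in_map_gfun c z d (t0 :: T) _) (ex_intro _ t (conj Ht erefl))).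
rewrite gfun_eval.
by rewrite ler_pdivrMr // lerBlDl.
Qed.

Lemma lin_max (c z : Theta -> R) (d : R) (hd : d < 0) :
  exists ls : seq ((Theta -> R) * R),
    forall W b, dotp c b + minratio z b * d <= W <->
      (forall f, List.In f ls -> affine_eval f b <= W).
Proof.
rewrite /minratio.
case E: [seq t <- enum Theta | 0 < z t] => [|t0 T].
  exists [:: (c, 0)] => V b; rewrite /= mul0r addr0.
  split=> [H f [<-|[]]|H]; first by rewrite /affine_eval addr0.
  by have := H _ (or_introl erefl); rewrite /affine_eval addr0.
exists (map (gfun c z d) (t0 :: T)) => V b.
rewrite /=.
have -> : dotp c b + foldr Num.min (b t0 / z t0) [seq b t / z t | t <- T] * d <= V
   <-> (V - dotp c b) / d <= foldr Num.min (b t0 / z t0) [seq b t / z t | t <- T].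
  by rewrite ler_ndivrMr // lerBrDl.
rewrite le_foldr_min (_ : b t0 / z t0 :: _ = map (fun t => b t / z t) (t0 :: T)) //; split.
  move=> H f Hf; have /in_map_gfun [t [Ht ->]] : List.In f (map (gfun c z d) (t0 :: T)) by []; rewrite gfun_eval.
  have := H (b t / z t) (proj2 (in_map_ratio b z (t0 :: T) _) (ex_intro _ t (conj Ht erefl))).
  by rewrite ler_ndivrMr // lerBrDl.
move=> H y Hy; have /in_map_ratio [t [Ht ->]] : List.In y (map (fun t => b t / z t) (t0 :: T)) by [].
have := H (gfun c z d t) (proj2 (in_map_gfun c z d (t0 :: T) _) (ex_intro _ t (conj Ht erefl))).
rewrite gfun_eval.
by rewrite ler_ndivrMr // lerBrDl.
Qed.

End Aux.

Theorem lemma4 (R : realFieldType) (Theta : finType) (c : Theta -> R)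
    (Y : seq ((Theta -> R) * R)) (Z : seq ((Theta -> R) * R))
    (hY : List.Forall (fun p => nonneg_nonzero p.1) Y)
    (hZ : List.Forall (fun p => nonneg_nonzero p.1) Z) :
  (exists ls : seq ((Theta -> R) * R),
     forall (V : R) (b : Theta -> R), nonneg_vec b ->
       (V <= upsilon_v c Y b <-> forall f, List.In f ls -> V <= affine_eval f b))
  /\
  (exists ms : seq ((Theta -> R) * R),
     forall (W : R) (l : Theta -> R), nonneg_vec l ->
       (upsilon_w c Z l <= W <-> forall f, List.In f ms -> affine_eval f l <= W)).
Proof.
split.
  clear hY hZ; elim: Y => [|[bj vj] Y' [ls IH]].
    exists [:: (c, 0)] => V b _ /=.
    split=> [H f [<-|[]]|H]; first by rewrite /affine_eval addr0.
    by have := H _ (or_introl erefl); rewrite /affine_eval addr0.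
  case: (boolP (0 < vj - dotp c bj)) => hd.
    have [ls' H] := (@lin_min R Theta c bj _ hd).
    by exists ls' => V b _ /=; rewrite hd; apply: H.
  by exists ls => V b hb /=; rewrite (negbTE hd); apply: IH.
clear hY hZ; elim: Z => [|[bj vj] Z' [ls IH]].
  exists [:: (c, 0)] => V b _ /=.
  split=> [H f [<-|[]]|H]; first by rewrite /affine_eval addr0.
  by have := H _ (or_introl erefl); rewrite /affine_eval addr0.
case: (boolP (vj - dotp c bj < 0)) => hd.
  have [ls' H] := (@lin_max R Theta c bj _ hd).
  by exists ls' => V b _ /=; rewrite hd; apply: H.
by exists ls => V b hb /=; rewrite (negbTE hd); apply: IH.
Qed.
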